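(* Assume $0<|\mathscr{C}|\leq\tfrac12$. Then for $z\in\mathbb{U}$ (except at points where $d_{-1}(z)$ or $d_1(z)$ vanishes) the characteristic equation $d_{-1}(z)\kappa^{-1}+d_0(z)+d_1(z)\kappa=0$ of the fourth-order D1Q3 scheme has two roots, one stable root $\kappa_s(z)\in\mathbb{D}$ and one unstable root $\kappa_u(z)\in\mathbb{U}$. They extend to $z\in\mathbb{S}$ (extensions still denoted $\kappa_s,\kappa_u$), and $$\kappa_s(1)=\begin{cases}-1,&\mathscr{C}<0,\\1,&\mathscr{C}>0,\end{cases}\qquad \kappa_u(1)=\begin{cases}1,&\mathscr{C}<0,\\-1,&\mathscr{C}>0,\end{cases}\qquad \kappa_s(-1)=\kappa_u(-1)=1.$$
   Context: $\mathbb{D}=\{|z|<1\}$, $\mathbb{S}=\{|z|=1\}$, $\mathbb{U}=\{|z|>1\}$. Fourth-order D1Q3 scheme: $q=3$, velocities $c_1=0$, $c_2=1$, $c_3=-1$, $M=\begin{pmatrix}1&1&1\\0&1&-1\\0&1&1\end{pmatrix}$, equilibrium $\epsilon=(1,\mathscr{C},\tfrac13(1+2\mathscr{C}^2))$, $s_2=s_3=2$, $K:=I_3+\mathrm{diag}(s_1,2,2)(\epsilon e_1^{\mathsf T}-I_3)$ ($s_1$ arbitrary), $\hat E(\kappa):=M\mathrm{diag}(1,\kappa^{-1},\kappa)M^{-1}K$. Characteristic equation: $\det(zI_3-\hat E(\kappa))=d_{-1}(z)\kappa^{-1}+d_0(z)+d_1(z)\kappa$, where explicitly $d_{-1}(z)=-\tfrac13(2\mathscr{C}^2+3\mathscr{C}-2)z^2+\tfrac13(2\mathscr{C}^2-3\mathscr{C}-2)z$,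 $d_0(z)=z^3+\tfrac13(4\mathscr{C}^2-1)z^2-\tfrac13(4\mathscr{C}^2-1)z-1$, $d_1(z)=-\tfrac13(2\mathscr{C}^2-3\mathscr{C}-2)z^2+\tfrac13(2\mathscr{C}^2+3\mathscr{C}-2)z$. *)

(* Defs.v *)
From Stdlib Require Import Reals.
From Coquelicot Require Import Coquelicot.
Open Scope R_scope.

Definition dm1 (Cc : R) (z : C) : C :=
  (RtoC (-(1/3) * (2*Cc^2 + 3*Cc - 2)) * z * z
   + RtoC ((1/3) * (2*Cc^2 - 3*Cc - 2)) * z)%C.

Definition d0 (Cc : R) (z : C) : C :=
  (z * z * z + RtoC ((1/3) * (4*Cc^2 - 1)) * z * z
   - RtoC ((1/3) * (4*Cc^2 - 1)) * z - RtoC 1)%C.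

Definition d1 (Cc : R) (z : C) : C :=
  (RtoC (-(1/3) * (2*Cc^2 - 3*Cc - 2)) * z * z
   + RtoC ((1/3) * (2*Cc^2 + 3*Cc - 2)) * z)%C.

Definition charEq (Cc : R) (z kappa : C) : C :=
  (dm1 Cc z / kappa + d0 Cc z + d1 Cc z * kappa)%C.

Definition Udom (Cc : R) (z : C) : Prop :=
  1 < Cmod z /\ dm1 Cc z <> RtoC 0 /\ d1 Cc z <> RtoC 0.

(* Main.v *)
Require Import Defs.
From Stdlib Require Import Reals Lra Psatz ClassicalDescription.
From Coquelicot Require Import Coquelicot.
Open Scope R_scope.

Definition cn2 (z : C) : R := fst z * fst z + snd z * snd z.
Definition E0 (c : R) : R := 2 * (1 - c^2) / 3.
Definition Ep (c : R) : R := (2*c+1)*(c+1)/6.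
Definition Em (c : R) : R := (1-2*c)*(1-c)/6.
Definition Q (c : R) (z k : C) : C := (Defs.d1 c z * k * k + Defs.d0 c z * k + Defs.dm1 c z)%C.

Ltac cunf := unfold Q, Defs.d1, Defs.d0, Defs.dm1, RtoC, Cmult, Cplus, Cminus, Copp, cn2; simpl.

Lemma Qform c (z k : C) :
  Q c z k = (- (RtoC (E0 c) * (1 - z) * (1 + k*z) * (k + z)
              + RtoC (Ep c) * (1 - k*z) * (1 + z) * (k + z)
              + RtoC (Em c) * (k - z) * (1 + z) * (1 + k*z)))%C.
Proof.
  destruct z as [x y]; destruct k as [p q].
  unfold E0, Ep, Em; cunf. f_equal; field.
Qed.

Definition W0 (z : C) := cn2 (1 + z)%C.
Definition Wp (z k : C) := cn2 (1 + k * z)%C.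
Definition Wm (z k : C) := cn2 (k + z)%C.
Definition AA c z k := E0 c * Wp z k * Wm z k + Ep c * W0 z * Wm z k + Em c * W0 z * Wp z k.
Definition BB c z k := W0 z * (Ep c * cn2 z * Wm z k - Em c * Wp z k).

Lemma star c z k : Q c z k = 0%C ->
  (cn2 k - 1) * BB c z k = - (cn2 z - 1) * AA c z k.
Proof.
  intro H.
  assert (H1 : fst (Q c z k) = 0) by (rewrite H; reflexivity).
  assert (H2 : snd (Q c z k) = 0) by (rewrite H; reflexivity).
  set (h := ((1 + z) * (1 + k * z) * (k + z))%C).
  assert (E : (cn2 k - 1) * BB c z k + (cn2 z - 1) * AA c z k
     = fst (Q c z k) * fst h + snd (Q c z k) * snd h).
  { unfold h. clear H H1 H2. destruct z as [x y]; destruct k as [p q].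
    unfold AA, BB, W0, Wp, Wm, E0, Ep, Em. cunf. field. }
  rewrite H1, H2 in E. lra.
Qed.

Lemma cn2_ge0 z : 0 <= cn2 z.
Proof. unfold cn2; nra. Qed.
Lemma cn2_mult a b : cn2 (a * b)%C = cn2 a * cn2 b.
Proof. destruct a, b; unfold cn2; simpl; ring. Qed.
Lemma cn2_0 (z : C) : cn2 z = 0 -> z = 0%C.
Proof. destruct z as [x y]; unfold cn2; simpl; intro.
  assert (x = 0) by nra. assert (y = 0) by nra. subst; reflexivity. Qed.
Lemma cn2_pos (z : C) : z <> 0%C -> 0 < cn2 z.
Proof. intro H. destruct (cn2_ge0 z); auto. exfalso; apply H, cn2_0; auto. Qed.

Record hyp (c : R) : Prop := { hc1 : -1/2 <= c; hc2 : c <= 1/2; hc3 : c <> 0 }.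
Lemma hyp_of c : 0 < Rabs c <= 1/2 -> hyp c.
Proof. intros [h1 h2]. unfold Rabs in *. destruct (Rcase_abs c); constructor; lra. Qed.

Lemma E0_pos c : hyp c -> 0 < E0 c.
Proof. intros [h1 h2 h3]. unfold E0. nra. Qed.
Lemma Ep_ge0 c : hyp c -> 0 <= Ep c.
Proof. intros [h1 h2 h3]. unfold Ep. nra. Qed.
Lemma Em_ge0 c : hyp c -> 0 <= Em c.
Proof. intros [h1 h2 h3]. unfold Em. nra. Qed.

Lemma W0_pos z : 1 < cn2 z -> 0 < W0 z.
Proof. intro H. unfold W0. apply cn2_pos. intro E.
  assert (z = (-1)%C) by (replace z with ((1+z)-1)%C by ring; rewrite E; ring).
  subst. unfold cn2 in H; simpl in H; lra. Qed.
Lemma Wp_pos z k : 1 < cn2 z -> cn2 k = 1 -> 0 < Wp z k.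
Proof. intros H Hk. unfold Wp. apply cn2_pos. intro E.
  assert (k*z = (-1)%C)%C by (replace (k*z)%C with ((1+k*z)-1)%C by ring; rewrite E; ring).
  assert (cn2 (k*z)%C = 1) by (rewrite H0; unfold cn2; simpl; ring).
  rewrite cn2_mult, Hk in H1. lra. Qed.
Lemma Wm_pos z k : 1 < cn2 z -> cn2 k = 1 -> 0 < Wm z k.
Proof. intros H Hk. unfold Wm. apply cn2_pos. intro E.
  assert (k = (-z)%C) by (replace k with ((k+z)-z)%C by ring; rewrite E; ring).
  subst. assert (cn2 (-z)%C = cn2 z) by (destruct z; unfold cn2; simpl; ring). lra. Qed.

Lemma no_unimod c z k : hyp c -> 1 < cn2 z -> Q c z k = 0%C -> cn2 k <> 1.
Proof.
  intros hc Hz HQ Hk. apply star in HQ. rewrite Hk in HQ.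
  assert (0 < AA c z k).
  { unfold AA. pose proof (E0_pos c hc). pose proof (Ep_ge0 c hc). pose proof (Em_ge0 c hc).
    pose proof (W0_pos z Hz). pose proof (Wp_pos z k Hz Hk). pose proof (Wm_pos z k Hz Hk).
    assert (0 < E0 c * Wp z k * Wm z k) by (apply Rmult_lt_0_compat; auto; apply Rmult_lt_0_compat; auto).
    assert (0 <= Ep c * W0 z * Wm z k) by (apply Rmult_le_pos; [apply Rmult_le_pos|]; lra).
    assert (0 <= Em c * W0 z * Wp z k) by (apply Rmult_le_pos; [apply Rmult_le_pos|]; lra).
    lra. }
  nra.
Qed.

Definition sgn (b : R) : R := if Rlt_dec b 0 then -1 else 1.
Definition csqrt (w : C) : C :=
  let a := fst w in let b := snd w in let m := sqrt (a*a + b*b) in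
  (sqrt ((m + a)/2), sgn b * sqrt ((m - a)/2)).

Lemma csqrt_sq w : (csqrt w * csqrt w)%C = w.
Proof.
  destruct w as [a b]. unfold csqrt, Cmult; simpl.
  set (m := sqrt (a*a+b*b)).
  assert (Hm0 : 0 <= m) by apply sqrt_pos.
  assert (Hm2 : m * m = a*a+b*b) by (apply sqrt_sqrt; nra).
  assert (Ha1 : 0 <= (m + a)/2) by nra.
  assert (Ha2 : 0 <= (m - a)/2) by nra.
  assert (Hs : sgn b * sgn b = 1) by (unfold sgn; destruct Rlt_dec; lra).
  pose proof (sqrt_sqrt _ Ha1) as S1. pose proof (sqrt_sqrt _ Ha2) as S2.
  f_equal.
  - replace (sqrt ((m + a) / 2) * sqrt ((m + a) / 2) - sgn b * sqrt ((m - a) / 2) * (sgn b * sqrt ((m - a) / 2)))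
      with (sqrt ((m + a) / 2) * sqrt ((m + a) / 2) - (sgn b * sgn b) * (sqrt ((m - a) / 2) * sqrt ((m - a) / 2))) by ring.
    rewrite S1, S2, Hs. field.
  - replace (sqrt ((m + a) / 2) * (sgn b * sqrt ((m - a) / 2)) + sgn b * sqrt ((m - a) / 2) * sqrt ((m + a) / 2))
      with (2 * sgn b * (sqrt ((m + a) / 2) * sqrt ((m - a) / 2))) by ring.
    rewrite <- sqrt_mult by auto.
    replace ((m + a) / 2 * ((m - a) / 2)) with ((b/2) * (b/2)) by nra.
    unfold sgn; destruct Rlt_dec.
    + replace (b/2*(b/2)) with ((-(b/2))*(-(b/2))) by ring. rewrite sqrt_square by lra. lra.
    + rewrite sqrt_square by lra. lra.
Qed.

Definition Dl (c : R) (z : C) : C := (Defs.d0 c z * Defs.d0 c z - 4 * Defs.d1 c z * Defs.dm1 c z)%C.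
Definition r1 c z : C := ((- Defs.d0 c z + csqrt (Dl c z)) / (2 * Defs.d1 c z))%C.
Definition r2 c z : C := ((- Defs.d0 c z - csqrt (Dl c z)) / (2 * Defs.d1 c z))%C.

Lemma Q_fact c z k : Defs.d1 c z <> 0%C ->
  Q c z k = (Defs.d1 c z * (k - r1 c z) * (k - r2 c z))%C.
Proof.
  intro H. unfold r1, r2.
  pose proof (csqrt_sq (Dl c z)) as Hs. set (s := csqrt (Dl c z)) in *.
  unfold Dl in Hs. unfold Q.
  set (a := Defs.d1 c z) in *. set (b := Defs.d0 c z) in *. set (e := Defs.dm1 c z) in *.
  assert (E : e = ((b*b - s*s)/(4*a))%C) by (rewrite Hs; field; auto).
  rewrite E. field. auto.
Qed.

Lemma Cmult_eq0 (a b : C) : (a * b)%C = 0%C -> a = 0%C \/ b = 0%C.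
Proof.
  intro H. destruct (Ceq_dec a 0) as [E|E]; [left; auto|right].
  replace b with (/a * (a*b))%C by (field; auto). rewrite H. ring.
Qed.

Lemma Q_zero_iff c z k : Defs.d1 c z <> 0%C ->
  (Q c z k = 0%C <-> k = r1 c z \/ k = r2 c z).
Proof.
  intro H. rewrite Q_fact by auto. split.
  - intro E. apply Cmult_eq0 in E. destruct E as [E|E].
    + apply Cmult_eq0 in E. destruct E as [E|E]; [contradiction|left].
      replace k with ((k - r1 c z) + r1 c z)%C by ring. rewrite E; ring.
    + right. replace k with ((k - r2 c z) + r2 c z)%C by ring. rewrite E; ring.
  - intros [E|E]; rewrite E; ring.
Qed.

Lemma r_sum c z : Defs.d1 c z <> 0%C -> (r1 c z + r2 c z)%C = (- Defs.d0 c z / Defs.d1 c z)%C.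
Proof. intro H. unfold r1, r2. field. auto. Qed.
Lemma r_prod c z : Defs.d1 c z <> 0%C -> (Defs.d1 c z * (r1 c z * r2 c z))%C = Defs.dm1 c z.
Proof.
  intro H. unfold r1, r2.
  pose proof (csqrt_sq (Dl c z)) as Hs. set (s := csqrt (Dl c z)) in *. unfold Dl in Hs.
  set (a := Defs.d1 c z) in *. set (b := Defs.d0 c z) in *. set (e := Defs.dm1 c z) in *.
  assert (E : e = ((b*b - s*s)/(4*a))%C) by (rewrite Hs; field; auto).
  rewrite E. field. auto.
Qed.

Definition Psi c z : R := cn2 (Defs.d1 c z) + cn2 (Defs.dm1 c z)
   - (cn2 (Defs.d0 c z) + sqrt (cn2 (Dl c z))) / 2.

Lemma Psi_roots c z : Defs.d1 c z <> 0%C ->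
  Psi c z = cn2 (Defs.d1 c z) * (1 - cn2 (r1 c z)) * (1 - cn2 (r2 c z)).
Proof.
  intro H. unfold Psi.
  pose proof (r_prod c z H) as Hp.
  pose proof (csqrt_sq (Dl c z)) as Hs.
  assert (Ha1 : (Defs.d1 c z * r1 c z)%C = ((- Defs.d0 c z + csqrt (Dl c z))/2)%C) by (unfold r1; field; auto).
  assert (Ha2 : (Defs.d1 c z * r2 c z)%C = ((- Defs.d0 c z - csqrt (Dl c z))/2)%C) by (unfold r2; field; auto).
  set (s := csqrt (Dl c z)) in *. set (a := Defs.d1 c z) in *. set (b := Defs.d0 c z) in *.
  set (e := Defs.dm1 c z) in *. set (u := r1 c z) in *. set (v := r2 c z) in *.
  assert (P1 : cn2 (a*u)%C + cn2 (a*v)%C = (cn2 b + cn2 s)/2).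
  { rewrite Ha1, Ha2. destruct b, s. unfold cn2, Cdiv, Cinv, Cmult, Cplus, Cminus, Copp, RtoC; simpl. field. }
  assert (P2 : cn2 s = sqrt (cn2 (Dl c z))).
  { rewrite <- Hs, cn2_mult. rewrite sqrt_square; auto. apply cn2_ge0. }
  assert (P3 : cn2 (a*u)%C * cn2 (a*v)%C = cn2 a * cn2 e).
  { rewrite <- Hp. rewrite !cn2_mult. ring. }
  rewrite !cn2_mult in P1, P3. rewrite <- P2.
  assert (0 < cn2 a) by (apply cn2_pos; auto).
  assert (cn2 e = cn2 a * cn2 u * cn2 v).
  { apply Rmult_eq_reg_l with (cn2 a). rewrite <- P3. ring. lra. }
  rewrite H1. nra.
Qed.
Section S.
Context {U : UniformSpace}.
Lemma rc_mult (f g : U -> R) x : continuous f x -> continuous g x -> continuous (fun y => f y * g y) x.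
Proof. apply (continuous_mult f g x). Qed.
Lemma rc_plus (f g : U -> R) x : continuous f x -> continuous g x -> continuous (fun y => f y + g y) x.
Proof. apply (continuous_plus f g x). Qed.
Lemma rc_opp (f : U -> R) x : continuous f x -> continuous (fun y => - f y) x.
Proof. apply (continuous_opp f x). Qed.
Lemma rc_minus (f g : U -> R) x : continuous f x -> continuous g x -> continuous (fun y => f y - g y) x.
Proof. apply (continuous_minus f g x). Qed.
Lemma rc_inv (f : U -> R) x : continuous f x -> f x <> 0 -> continuous (fun y => / f y) x.
Proof. intros. apply (continuous_comp f Rinv). auto. apply continuous_Rinv. auto. Qed.
Lemma rc_sqrt (f : U -> R) x : continuous f x -> continuous (fun y => sqrt (f y)) x.
Proof. intros. apply (continuous_comp f sqrt). auto. apply continuous_sqrt. Qed.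
Lemma rc_const (a : R) x : continuous (fun _ : U => a) x.
Proof. apply continuous_const. Qed.
End S.
Section S2.
Context {U : UniformSpace}.
Definition Ccont (f : U -> C) (x : U) :=
  continuous (fun y => fst (f y)) x /\ continuous (fun y => snd (f y)) x.
Lemma Cc_const (a : C) x : Ccont (fun _ => a) x.
Proof. split; apply continuous_const. Qed.
Lemma Cc_plus f g x : Ccont f x -> Ccont g x -> Ccont (fun y => (f y + g y)%C) x.
Proof. intros [] []; split; simpl; [apply rc_plus|apply rc_plus]; auto. Qed.
Lemma Cc_opp f x : Ccont f x -> Ccont (fun y => (- f y)%C) x.
Proof. intros []; split; simpl; apply rc_opp; auto. Qed.
Lemma Cc_minus f g x : Ccont f x -> Ccont g x -> Ccont (fun y => (f y - g y)%C) x.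
Proof. intros; unfold Cminus; apply Cc_plus; auto; apply Cc_opp; auto. Qed.
Lemma Cc_mult f g x : Ccont f x -> Ccont g x -> Ccont (fun y => (f y * g y)%C) x.
Proof. intros [] []; split; simpl;
  [apply rc_minus|apply rc_plus]; apply rc_mult; auto. Qed.
Lemma Cc_inv f x : Ccont f x -> f x <> 0%C -> Ccont (fun y => (/ f y)%C) x.
Proof.
  intros [H1 H2] Hn.
  assert (D : fst (f x) ^ 2 + snd (f x) ^ 2 <> 0).
  { intro E. apply Hn. destruct (f x) as [a b]. simpl in E.
    assert (a = 0) by nra. assert (b = 0) by nra. subst; reflexivity. }
  assert (Hd : continuous (fun y => fst (f y) ^ 2 + snd (f y) ^ 2) x).
  { apply rc_plus; simpl; apply rc_mult; auto; apply rc_mult; auto; apply rc_const. }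
  split; simpl; unfold Rdiv; apply rc_mult; auto; try apply rc_opp; auto; apply rc_inv; auto.
Qed.
Lemma Cc_div f g x : Ccont f x -> Ccont g x -> g x <> 0%C -> Ccont (fun y => (f y / g y)%C) x.
Proof. intros; unfold Cdiv; apply Cc_mult; auto; apply Cc_inv; auto. Qed.
Lemma cn2_cont f x : Ccont f x -> continuous (fun y => fst (f y) * fst (f y) + snd (f y) * snd (f y)) x.
Proof. intros []; apply rc_plus; apply rc_mult; auto. Qed.
End S2.

Ltac ccont0 :=
  lazymatch goal with
  | |- Ccont (fun y => (_ + _)%C) _ => apply Cc_plus; ccont0
  | |- Ccont (fun y => (_ - _)%C) _ => apply Cc_minus; ccont0
  | |- Ccont (fun y => (_ * _)%C) _ => apply Cc_mult; ccont0
  | |- Ccont (fun y => (_ / _)%C) _ => apply Cc_div; [ccont0|ccont0|]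
  | |- Ccont (fun y => (- _)%C) _ => apply Cc_opp; ccont0
  | |- Ccont (fun y => ?g y) _ => assumption
  | |- Ccont (fun y => _) _ => first [apply Cc_const | assumption]
  | |- _ => try assumption
  end.

Lemma Cc_d1 {U : UniformSpace} c (g : U -> C) x : Ccont g x -> Ccont (fun y => Defs.d1 c (g y)) x.
Proof. intro; unfold Defs.d1; ccont0. Qed.
Lemma Cc_d0 {U : UniformSpace} c (g : U -> C) x : Ccont g x -> Ccont (fun y => Defs.d0 c (g y)) x.
Proof. intro; unfold Defs.d0; ccont0. Qed.
Lemma Cc_dm1 {U : UniformSpace} c (g : U -> C) x : Ccont g x -> Ccont (fun y => Defs.dm1 c (g y)) x.
Proof. intro; unfold Defs.dm1; ccont0. Qed.
Lemma Cc_id (x : C) : Ccont (fun y : C => y) x.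
Proof. destruct x. split; [apply continuous_fst|apply continuous_snd]. Qed.

Ltac ccont :=
  first [ assumption |
  lazymatch goal with
  | |- Ccont (fun y => (_ + _)%C) _ => apply Cc_plus; ccont
  | |- Ccont (fun y => (_ - _)%C) _ => apply Cc_minus; ccont
  | |- Ccont (fun y => (_ * _)%C) _ => apply Cc_mult; ccont
  | |- Ccont (fun y => (_ / _)%C) _ => apply Cc_div; [ccont|ccont|]
  | |- Ccont (fun y => (- _)%C) _ => apply Cc_opp; ccont
  | |- Ccont (fun y => Defs.d1 _ _) _ => apply Cc_d1; ccont
  | |- Ccont (fun y => Defs.d0 _ _) _ => apply Cc_d0; ccont
  | |- Ccont (fun y => Defs.dm1 _ _) _ => apply Cc_dm1; ccont
  | |- Ccont (Defs.d1 _) _ => apply (Cc_d1 _ (fun y => y)); ccont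
  | |- Ccont (Defs.d0 _) _ => apply (Cc_d0 _ (fun y => y)); ccont
  | |- Ccont (Defs.dm1 _) _ => apply (Cc_dm1 _ (fun y => y)); ccont
  | |- Ccont (fun y => _) _ => first [apply Cc_const | idtac]
  | |- _ => try assumption
  end ].

Lemma cn2_Cmod z : cn2 z = Cmod z ^ 2.
Proof. rewrite Cmod2_alt. unfold cn2, Re, Im. ring. Qed.

Lemma Cmod_quad (a b : R) (w : C) :
  Cmod (RtoC a * w * w + RtoC b * w)%C <= Rabs a * Cmod w ^ 2 + Rabs b * Cmod w.
Proof.
  eapply Rle_trans. apply Cmod_triangle. rewrite !Cmod_mult, !Cmod_R. right; ring.
Qed.

Lemma abs_le1 x : -1 <= x <= 1 -> Rabs x <= 1.
Proof. intros. unfold Rabs; destruct Rcase_abs; lra. Qed.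

Lemma quad_bound a b r : Rabs a <= 1 -> Rabs b <= 1 -> 1 <= r -> Rabs a * r^2 + Rabs b * r <= 2 * r^2.
Proof. intros. pose proof (Rabs_pos a). pose proof (Rabs_pos b).
  assert (Rabs a * r^2 <= r^2) by (rewrite <- (Rmult_1_l (r^2)) at 2; apply Rmult_le_compat_r; nra).
  assert (Rabs b * r <= r) by (rewrite <- (Rmult_1_l r) at 2; apply Rmult_le_compat_r; nra).
  nra. Qed.

Lemma Psi_big c w : hyp c -> 8 < Cmod w -> Psi c w < 0.
Proof.
  intros hc Hw. destruct hc as [h1 h2 h3].
  set (r := Cmod w) in *.
  assert (B1 : Cmod (Defs.d1 c w) <= 2 * r^2).
  { unfold Defs.d1. eapply Rle_trans. apply Cmod_quad.
    assert (Rabs (- (1 / 3) * (2 * c ^ 2 - 3 * c - 2)) <= 1) by (apply abs_le1; nra).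
    assert (Rabs (1 / 3 * (2 * c ^ 2 + 3 * c - 2)) <= 1) by (apply abs_le1; nra).
    apply quad_bound; auto; lra. }
  assert (B2 : Cmod (Defs.dm1 c w) <= 2 * r^2).
  { unfold Defs.dm1. eapply Rle_trans. apply Cmod_quad.
    assert (Rabs (- (1 / 3) * (2 * c ^ 2 + 3 * c - 2)) <= 1) by (apply abs_le1; nra).
    assert (Rabs (1 / 3 * (2 * c ^ 2 - 3 * c - 2)) <= 1) by (apply abs_le1; nra).
    apply quad_bound; auto; lra. }
  assert (B3 : r^3 / 2 <= Cmod (Defs.d0 c w)).
  { set (a := 1 / 3 * (4 * c ^ 2 - 1)).
    assert (Ha : Rabs a <= 1) by (apply abs_le1; unfold a; nra).
    assert (E : (w*w*w)%C = (Defs.d0 c w - (RtoC a * w * w - RtoC a * w - 1))%C) by (unfold Defs.d0, a; ring).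
    assert (Cmod (w*w*w)%C = r^3) by (rewrite !Cmod_mult; unfold r; ring).
    assert (Cmod (RtoC a * w * w - RtoC a * w - 1)%C <= r^2 + r + 1).
    { unfold Cminus. eapply Rle_trans. apply Cmod_triangle.
      rewrite Cmod_opp, Cmod_1.
      replace (RtoC a * w * w + - (RtoC a * w))%C with (RtoC a * w * w + RtoC (-a) * w)%C
        by (unfold RtoC, Cmult, Copp, Cplus; simpl; f_equal; ring).
      pose proof (Cmod_quad a (-a) w). rewrite Rabs_Ropp in H0. fold r in H0. nra. }
    assert (Cmod (w*w*w)%C <= Cmod (Defs.d0 c w) + (r^2+r+1)).
    { rewrite E. unfold Cminus at 1. eapply Rle_trans. apply Cmod_triangle. rewrite Cmod_opp. lra. }
    nra. }
  unfold Psi. rewrite !cn2_Cmod.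
  assert (0 <= sqrt (Cmod (Dl c w) ^2)) by apply sqrt_pos.
  assert (0 <= Cmod (Defs.d1 c w)) by apply Cmod_ge_0.
  assert (0 <= Cmod (Defs.dm1 c w)) by apply Cmod_ge_0.
  assert (Cmod (Defs.d1 c w) ^2 <= 4 * r^4) by nra.
  assert (Cmod (Defs.dm1 c w) ^2 <= 4 * r^4) by nra.
  assert (r^6/4 <= Cmod (Defs.d0 c w) ^2).
  { assert (0 <= r^3/2) by (assert (0 < r) by lra; pose proof (pow_lt r 3 H4); lra).
    replace (r^6/4) with ((r^3/2)*(r^3/2)) by field. simpl. rewrite Rmult_1_r.
    apply Rmult_le_compat; lra. }
  assert (r^2 > 64) by nra.
  assert (r^6 > 64 * r^4).
  { replace (r^6) with (r^2 * r^4) by ring. apply Rmult_gt_compat_r. pose proof (pow_lt r 4). lra. lra. }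
  nra.
Qed.

Lemma Psi_ne0 c z : hyp c -> 1 < cn2 z -> Psi c z <> 0.
Proof.
  intros hc Hz HP.
  destruct (Ceq_dec (Defs.d1 c z) 0) as [E|E].
  - unfold Psi in HP. unfold Dl in HP. rewrite E in HP.
    replace (Defs.d0 c z * Defs.d0 c z - 4 * 0 * Defs.dm1 c z)%C with (Defs.d0 c z * Defs.d0 c z)%C in HP by ring.
    rewrite cn2_mult in HP. rewrite sqrt_square in HP by apply cn2_ge0.
    replace (cn2 0%C) with 0 in HP by (unfold cn2; simpl; ring).
    destruct (Ceq_dec (Defs.d0 c z) 0) as [E0'|E0'].
    + rewrite E0' in HP. replace (cn2 0%C) with 0 in HP by (unfold cn2; simpl; ring).
      assert (Hm : Defs.dm1 c z = 0%C) by (apply cn2_0; lra).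
      apply (no_unimod c z 1 hc Hz).
      * unfold Q. rewrite E, E0', Hm. ring.
      * unfold cn2; simpl; ring.
    + set (k := (- Defs.dm1 c z / Defs.d0 c z)%C).
      apply (no_unimod c z k hc Hz).
      * unfold Q, k. rewrite E. field. auto.
      * assert (cn2 (k * Defs.d0 c z)%C = cn2 (Defs.dm1 c z)).
        { unfold k. replace (- Defs.dm1 c z / Defs.d0 c z * Defs.d0 c z)%C with (- Defs.dm1 c z)%C by (field; auto).
          destruct (Defs.dm1 c z); unfold cn2; simpl; ring. }
        rewrite cn2_mult in H. pose proof (cn2_pos _ E0'). 
        apply Rmult_eq_reg_r with (cn2 (Defs.d0 c z)); lra.
  - rewrite Psi_roots in HP by auto.
    pose proof (cn2_pos _ E).
    assert (H1 : (1 - cn2 (r1 c z)) * (1 - cn2 (r2 c z)) = 0).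
    { apply Rmult_eq_reg_l with (cn2 (Defs.d1 c z)); [|lra]. transitivity (cn2 (Defs.d1 c z) * (1 - cn2 (r1 c z)) * (1 - cn2 (r2 c z))). ring. rewrite HP; ring. }
    apply Rmult_integral in H1. destruct H1 as [H1|H1].
    + apply (no_unimod c z (r1 c z) hc Hz); [apply Q_zero_iff; auto|lra].
    + apply (no_unimod c z (r2 c z) hc Hz); [apply Q_zero_iff; auto|lra].
Qed.

Lemma Cc_RtoC (t : R) : Ccont (fun y : R => RtoC y) t.
Proof. split; simpl. apply continuous_id. apply continuous_const. Qed.

Lemma cn2c {U : UniformSpace} (f : U -> C) x : Ccont f x -> continuous (fun y => cn2 (f y)) x.
Proof. apply cn2_cont. Qed.

Lemma Psi_ray_cont c z t : continuous (fun t => Psi c (RtoC t * z)%C) t.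
Proof.
  assert (G : Ccont (fun t : R => (RtoC t * z)%C) t) by (apply Cc_mult; [apply Cc_RtoC|apply Cc_const]).
  unfold Psi.
  apply (rc_minus (fun t => cn2 (Defs.d1 c (RtoC t * z)%C) + cn2 (Defs.dm1 c (RtoC t * z)%C))
     (fun t => (cn2 (Defs.d0 c (RtoC t * z)%C) + sqrt (cn2 (Dl c (RtoC t * z)%C)))/2)).
  - apply (rc_plus (fun t => cn2 (Defs.d1 c (RtoC t * z)%C)) (fun t => cn2 (Defs.dm1 c (RtoC t * z)%C)));
    apply cn2c; ccont.
  - unfold Rdiv. apply (rc_mult (fun t => cn2 (Defs.d0 c (RtoC t * z)%C) + sqrt (cn2 (Dl c (RtoC t * z)%C)))); [|apply rc_const].
    apply (rc_plus (fun t => cn2 (Defs.d0 c (RtoC t * z)%C)) (fun t => sqrt (cn2 (Dl c (RtoC t * z)%C)))).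
    + apply cn2c; ccont.
    + apply (rc_sqrt (fun t => cn2 (Dl c (RtoC t * z)%C))). apply cn2c. unfold Dl. ccont.
Qed.

Lemma Psi_neg c z : hyp c -> 1 < cn2 z -> Psi c z < 0.
Proof.
  intros hc Hz.
  destruct (Rtotal_order (Psi c z) 0) as [H|[H|H]]; auto.
  - exfalso; eapply Psi_ne0; eauto.
  - exfalso.
    set (f := fun t => - Psi c (RtoC t * z)%C).
    assert (Hf : continuity f).
    { intro t. apply continuity_pt_filterlim. unfold f. apply (rc_opp (fun t => Psi c (RtoC t * z)%C)). apply Psi_ray_cont. }
    assert (Hz1 : 1 < Cmod z).
    { rewrite cn2_Cmod in Hz. pose proof (Cmod_ge_0 z). nra. }
    assert (f1 : f 1 < 0).
    { unfold f. replace (RtoC 1 * z)%C with z by ring. lra. }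
    assert (f9 : 0 < f 9).
    { unfold f. assert (Psi c (RtoC 9 * z)%C < 0); [|lra]. apply Psi_big; auto.
      rewrite Cmod_mult, Cmod_R. rewrite Rabs_pos_eq by lra. lra. }
    destruct (IVT f 1 9 Hf ltac:(lra) f1 f9) as [t [Ht Hft]].
    apply (Psi_ne0 c (RtoC t * z)%C hc).
    + rewrite cn2_mult. unfold cn2 at 1; simpl. assert (1 <= t*t) by nra. replace (t*t+0*0) with (t*t) by ring. assert (cn2 z <= t*t*cn2 z) by (rewrite <- (Rmult_1_l (cn2 z)) at 1; apply Rmult_le_compat_r; [apply cn2_ge0|lra]). lra.
    + unfold f in Hft. lra.
Qed.

Lemma d1_circ c z : hyp c -> cn2 z = 1 -> Defs.d1 c z <> 0%C.
Proof.
  intros [h1 h2 h3] Hz E. destruct z as [x y]. unfold cn2 in Hz; simpl in Hz.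
  unfold Defs.d1, RtoC, Cmult, Cplus in E; simpl in E. injection E as E1 E2.
  set (A := - (1 / 3) * (2 * c ^ 2 - 3 * c - 2)) in *.
  set (B := 1 / 3 * (2 * c ^ 2 + 3 * c - 2)) in *.
  assert (HAB1 : A + B = 2 * c) by (unfold A, B; field).
  assert (HAB2 : A - B = 4/3 * (1 - c^2)) by (unfold A, B; field).
  assert (HAB3 : A - B > 0) by (rewrite HAB2; nra).
  (* d1 = z (A z + B) *)
  assert (F1 : x * (A * x + B) - y * (A * y) = 0) by (rewrite <- E1; unfold A, B; ring).
  assert (F2 : x * (A * y) + y * (A * x + B) = 0) by (rewrite <- E2; unfold A, B; ring).
  assert (G1 : A * x + B = 0 /\ A * y = 0).
  { assert (H0 : (x * (A * x + B) - y * (A * y)) * x + (x * (A * y) + y * (A * x + B)) * y = (A * x + B) * (x*x+y*y)) by ring.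
    assert (H1 : -(x * (A * x + B) - y * (A * y)) * y + (x * (A * y) + y * (A * x + B)) * x = (A * y) * (x*x+y*y)) by ring.
    rewrite F1, F2, Hz in H0, H1. split; lra. }
  destruct G1 as [G1 G2].
  apply Rmult_integral in G2. destruct G2 as [G2|G2].
  - rewrite G2 in G1. lra.
  - subst y. assert (x = 1 \/ x = -1) by (assert ((x-1)*(x+1) = 0) by nra; apply Rmult_integral in H; lra).
    destruct H; subst x; lra.
Qed.

Lemma csqrt0 : csqrt 0%C = 0%C.
Proof.
  unfold csqrt; simpl. replace (0*0+0*0) with 0 by ring. rewrite sqrt_0.
  replace ((0+0)/2) with 0 by field. replace ((0-0)/2) with 0 by field. rewrite sqrt_0.
  unfold RtoC; f_equal; ring.
Qed.

Lemma r_m1 c : hyp c -> r1 c (-1)%C = 1%C /\ r2 c (-1)%C = 1%C.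
Proof.
  intros [h1 h2 h3].
  assert (HD : Dl c (-1)%C = 0%C).
  { unfold Dl, Defs.d0, Defs.d1, Defs.dm1, Cminus, Copp, Cplus, Cmult, RtoC; cbn [fst snd]. f_equal; field. }
  assert (Hd1 : Defs.d1 c (-1)%C = RtoC (4/3 * (1 - c^2))).
  { unfold Defs.d1, Cminus, Copp, Cplus, Cmult, RtoC; cbn [fst snd]. f_equal; field. }
  assert (Hd0 : Defs.d0 c (-1)%C = RtoC (-8/3 * (1 - c^2))).
  { unfold Defs.d0, Cminus, Copp, Cplus, Cmult, RtoC; cbn [fst snd]. f_equal; field. }
  assert (Hn : RtoC (4/3 * (1 - c^2)) <> 0%C).
  { intro E. injection E as E. nra. }
  unfold r1, r2. rewrite HD, csqrt0, Hd1, Hd0. split.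
  - field_simplify_eq; auto.
    unfold Cminus, Copp, Cplus, Cmult, RtoC; cbn [fst snd]; f_equal; field.
  - field_simplify_eq; auto.
    unfold Cminus, Copp, Cplus, Cmult, RtoC; cbn [fst snd]; f_equal; field.
Qed.

Ltac cbnC := unfold Cdiv, Cminus; unfold Cinv, Copp, Cplus, Cmult, RtoC; cbn [fst snd].

Lemma r_1 c : hyp c -> (r1 c 1%C = 1%C /\ r2 c 1%C = (-1)%C) \/ (r1 c 1%C = (-1)%C /\ r2 c 1%C = 1%C).
Proof.
  intros hc. pose proof hc as [h1 h2 h3].
  assert (Hd1 : Defs.d1 c 1%C = RtoC (2*c)) by (unfold Defs.d1; cbnC; f_equal; field).
  assert (Hd0 : Defs.d0 c 1%C = 0%C) by (unfold Defs.d0; cbnC; f_equal; field).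
  assert (Hdm : Defs.dm1 c 1%C = RtoC (-2*c)) by (unfold Defs.dm1; cbnC; f_equal; field).
  assert (Hn : Defs.d1 c 1%C <> 0%C) by (rewrite Hd1; intro E; injection E; lra).
  assert (Hs := r_sum c 1%C Hn). rewrite Hd0 in Hs.
  assert (Hr2 : r2 c 1%C = (- r1 c 1%C)%C).
  { replace (r2 c 1%C) with ((r1 c 1%C + r2 c 1%C) - r1 c 1%C)%C by ring. rewrite Hs. field. auto. }
  assert (HQ : Q c 1%C (r1 c 1%C) = 0%C) by (apply Q_zero_iff; auto).
  unfold Q in HQ. rewrite Hd1, Hd0, Hdm in HQ. replace (RtoC (-2*c)) with (- RtoC (2*c))%C in HQ by (unfold RtoC, Copp; cbn [fst snd]; f_equal; ring).
  assert (E : (RtoC (2*c) * ((r1 c 1%C - 1) * (r1 c 1%C + 1)))%C = 0%C) by (rewrite <- HQ; ring).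
  apply Cmult_eq0 in E. destruct E as [E|E]. { injection E; lra. }
  apply Cmult_eq0 in E. destruct E as [E|E].
  - left. assert (r1 c 1%C = 1%C) by (replace (r1 c 1%C) with ((r1 c 1%C - 1) + 1)%C by ring; rewrite E; ring).
    split; auto. rewrite Hr2, H; cbnC; f_equal; ring.
  - right. assert (r1 c 1%C = (-1)%C) by (replace (r1 c 1%C) with ((r1 c 1%C + 1) - 1)%C by ring; rewrite E; cbnC; f_equal; ring).
    split; auto. rewrite Hr2, H. cbnC; f_equal; ring.
Qed.

Lemma BB_1_1 c : BB c 1%C 1%C = 16 * c.
Proof. unfold BB, W0, Wm, Wp, cn2, Ep, Em. cbnC. field. Qed.
Lemma BB_1_m1 c : BB c 1%C (-1)%C = 0.
Proof. unfold BB, W0, Wm, Wp, cn2, Ep, Em. cbnC. field. Qed.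

Definition n2 : C := (1+1)%C.
Definition n3 : C := (1+1+1)%C.
Lemma n2_ne0 : n2 <> 0%C. Proof. unfold n2; cbnC; intro E; injection E; lra. Qed.
Lemma n3_ne0 : n3 <> 0%C. Proof. unfold n3; cbnC; intro E; injection E; lra. Qed.

Lemma d1_C c z : Defs.d1 c z = ((- (n2*RtoC c*RtoC c - n3*RtoC c - n2) * z*z + (n2*RtoC c*RtoC c + n3*RtoC c - n2)*z)/n3)%C.
Proof. destruct z; unfold Defs.d1, n2, n3; cbnC; f_equal; field. Qed.
Lemma dm1_C c z : Defs.dm1 c z = ((- (n2*RtoC c*RtoC c + n3*RtoC c - n2) * z*z + (n2*RtoC c*RtoC c - n3*RtoC c - n2)*z)/n3)%C.
Proof. destruct z; unfold Defs.dm1, n2, n3; cbnC; f_equal; field. Qed.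
Lemma d0_C c z : Defs.d0 c z = (z*z*z + ((n2*n2*RtoC c*RtoC c - 1)/n3)*z*z - ((n2*n2*RtoC c*RtoC c - 1)/n3)*z - 1)%C.
Proof. destruct z; unfold Defs.d0, n2, n3; cbnC; f_equal; field. Qed.
Lemma Ep_C c : RtoC (Ep c) = ((n2*RtoC c + 1)*(RtoC c + 1)/(n2*n3))%C.
Proof. unfold Ep, n2, n3; cbnC; f_equal; field. Qed.
Lemma Em_C c : RtoC (Em c) = ((1 - n2*RtoC c)*(1 - RtoC c)/(n2*n3))%C.
Proof. unfold Em, n2, n3; cbnC; f_equal; field. Qed.

(* identity relating BB to derivative on the torus *)
Lemma B_ident c (z k : C) : z <> 0%C -> k <> 0%C ->
  let u := (/ z)%C in let v := (/ k)%C in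
  ((1+z)*(v+z)*(k+z) *
   (n2 * ((1+z)*(1+u)*(RtoC (Ep c)*(k+z)*(v+u) - RtoC (Em c)*(1+k*z)*(1+v*u)))
     - (1+u)*(k+u)*(v+u)*(Defs.d1 c z * k - Defs.dm1 c z * v)))%C
  = (- ((1+u)*(k+u)*(v+u)) * Q c z k * ((1+z)*(- (v*v)*(k+z) + (v+z))))%C.
Proof.
  intros Hz Hk u v. unfold u, v, Q. rewrite d1_C, d0_C, dm1_C, Ep_C, Em_C.
  pose proof n2_ne0. pose proof n3_ne0.
  unfold n2, n3 in *. field. split; auto.
Qed.

Lemma inv_circ (z : C) : cn2 z = 1 -> (/ z)%C = Cconj z.
Proof.
  destruct z as [x y]; unfold cn2; simpl; intro H. unfold Cinv, Cconj; simpl.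
  replace (x * (x * 1) + y * (y * 1)) with 1 by lra. f_equal; field.
Qed.

Lemma BB_C c (z k : C) : cn2 z = 1 -> cn2 k = 1 ->
  RtoC (BB c z k) = ((1+z)*(1+ /z)*(RtoC (Ep c)*(k+z)*(/k + /z) - RtoC (Em c)*(1+k*z)*(1+ /k * /z)))%C.
Proof.
  intros Hz Hk. rewrite !inv_circ by auto. unfold BB. rewrite Hz.
  destruct z as [x y], k as [p q]. unfold W0, Wm, Wp, cn2, Cconj. cbnC. f_equal; ring.
Qed.

Lemma dm1_minus_d1 c z : (Defs.dm1 c z - Defs.d1 c z)%C = (RtoC (-2*c) * z * (z+1))%C.
Proof. destruct z; unfold Defs.dm1, Defs.d1; cbnC; f_equal; field. Qed.

Lemma neq0_circ (z : C) : cn2 z = 1 -> z <> 0%C.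
Proof. intros H E. subst. unfold cn2 in H; simpl in H. lra. Qed.

Lemma und_root c z k : cn2 z = 1 -> cn2 k = 1 -> Q c z k = 0%C -> BB c z k = 0 ->
  z = (-1)%C \/ k = (- / z)%C \/ k = (- z)%C \/ (Defs.d1 c z * k - Defs.dm1 c z * / k)%C = 0%C.
Proof.
  intros Hz Hk HQ HB.
  pose proof (neq0_circ z Hz) as Hz0. pose proof (neq0_circ k Hk) as Hk0.
  pose proof (B_ident c z k Hz0 Hk0) as E. cbv zeta in E.
  rewrite <- (BB_C c z k Hz Hk), HB, HQ in E.
  set (u := (/ z)%C) in *. set (v := (/ k)%C) in *.
  assert (Hzu : (z * u)%C = 1%C) by (unfold u; field; auto).
  assert (Hkv : (k * v)%C = 1%C) by (unfold v; field; auto).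
  assert (E2 : ((1+z)*(v+z)*(k+z)*((1+u)*(k+u)*(v+u))*(Defs.d1 c z * k - Defs.dm1 c z * v))%C = 0%C).
  { transitivity (- ((1+z)*(v+z)*(k+z) * (n2 * RtoC 0 - (1+u)*(k+u)*(v+u)*(Defs.d1 c z * k - Defs.dm1 c z * v))))%C.
    - assert (Z: (n2 * RtoC 0)%C = 0%C) by (unfold n2; cbnC; f_equal; ring). rewrite Z. ring.
    - rewrite E. ring. }
  repeat (apply Cmult_eq0 in E2; destruct E2 as [E2|E2]).
  - left. replace z with ((1+z) - 1)%C by ring. rewrite E2. cbnC; f_equal; ring.
  - right; left. replace k with (/ v)%C by (unfold v; field; auto).
    replace v with ((v+z) - z)%C by ring. rewrite E2. unfold u. field. auto.
  - right; right; left. replace k with ((k+z) - z)%C by ring. rewrite E2. ring.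
  - left. replace z with (/ u)%C by (unfold u; field; auto).
    replace u with ((1+u) - 1)%C by ring. rewrite E2. cbnC. f_equal; field.
  - right; left. replace k with ((k+u) - u)%C by ring. rewrite E2. ring.
  - right; right; left. replace k with (/ v)%C by (unfold v; field; auto).
    replace v with ((v+u) - u)%C by ring. rewrite E2. unfold u. field. auto.
  - right; right; right. auto.
Qed.

Lemma both_und c z : hyp c -> cn2 z = 1 -> r1 c z <> r2 c z ->
  cn2 (r1 c z) = 1 -> cn2 (r2 c z) = 1 -> BB c z (r1 c z) = 0 -> BB c z (r2 c z) = 0 -> False.
Proof.
  intros hc Hz Hab Ha Hb HBa HBb.
  pose proof (d1_circ c z hc Hz) as Hd. pose proof (neq0_circ z Hz) as Hz0.
  pose proof (neq0_circ _ Ha) as Ha0. pose proof (neq0_circ _ Hb) as Hb0.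
  pose proof (r_prod c z Hd) as Hp.
  set (a := r1 c z) in *. set (b := r2 c z) in *.
  assert (Qa : Q c z a = 0%C) by (apply Q_zero_iff; auto).
  assert (Qb : Q c z b = 0%C) by (apply Q_zero_iff; auto).
  assert (Hm1 : z <> (-1)%C).
  { intro E. apply Hab. unfold a, b. rewrite E. destruct (r_m1 c hc) as [E1 E2]. rewrite E1, E2. auto. }
  assert (Hsq : forall k : C, k <> 0%C -> (k = a \/ k = b) -> (Defs.d1 c z * k - Defs.dm1 c z * / k)%C = 0%C -> False).
  { intros k Hk0 Hk E. rewrite <- Hp in E.
    destruct Hk as [Hk|Hk]; subst k.
    - assert (E2 : (Defs.d1 c z * (a - b))%C = 0%C) by (rewrite <- E; field; auto).
      apply Cmult_eq0 in E2. destruct E2 as [E2|E2]; [contradiction|].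
      apply Hab. replace a with ((a - b) + b)%C by ring. rewrite E2; ring.
    - assert (E2 : (Defs.d1 c z * (b - a))%C = 0%C) by (rewrite <- E; field; auto).
      apply Cmult_eq0 in E2. destruct E2 as [E2|E2]; [contradiction|].
      apply Hab. replace b with ((b - a) + a)%C by ring. rewrite E2; ring. }
  destruct (und_root c z a Hz Ha Qa HBa) as [E|[E|[E|E]]]; [contradiction| | |eapply (Hsq a); eauto];
  (destruct (und_root c z b Hz Hb Qb HBb) as [F|[F|[F|F]]]; [contradiction| | |eapply (Hsq b); eauto]).
  - apply Hab. rewrite E, F. reflexivity.
  - assert (Pab : (a * b)%C = 1%C) by (rewrite E, F; field; auto).
    assert (Hdd : Defs.dm1 c z = Defs.d1 c z) by (rewrite <- Hp, Pab; ring).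
    assert (X := dm1_minus_d1 c z). rewrite Hdd in X.
    replace (Defs.d1 c z - Defs.d1 c z)%C with (RtoC 0) in X by ring.
    symmetry in X. apply Cmult_eq0 in X. destruct X as [X|X].
    + apply Cmult_eq0 in X. destruct X as [X|X]; [|contradiction].
      injection X. destruct hc; lra.
    + apply Hm1. replace z with ((z+1) - 1)%C by ring. rewrite X. cbnC; f_equal; ring.
  - assert (Pab : (a * b)%C = 1%C) by (rewrite E, F; field; auto).
    assert (Hdd : Defs.dm1 c z = Defs.d1 c z) by (rewrite <- Hp, Pab; ring).
    assert (X := dm1_minus_d1 c z). rewrite Hdd in X.
    replace (Defs.d1 c z - Defs.d1 c z)%C with (RtoC 0) in X by ring.
    symmetry in X. apply Cmult_eq0 in X. destruct X as [X|X].
    + apply Cmult_eq0 in X. destruct X as [X|X]; [|contradiction].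
      injection X. destruct hc; lra.
    + apply Hm1. replace z with ((z+1) - 1)%C by ring. rewrite X. cbnC; f_equal; ring.
  - apply Hab. rewrite E, F. reflexivity.
Qed.

Lemma ball_R (x y e : R) : ball x e y <-> Rabs (y - x) < e.
Proof. unfold ball; simpl. unfold AbsRing_ball, abs, minus, plus, opp; simpl. tauto. Qed.

Lemma Cmod_le_sum (w : C) : Cmod w <= Rabs (fst w) + Rabs (snd w).
Proof.
  pose proof (Cmod_ge_0 w). pose proof (Cmod2_alt w). unfold Re, Im in H0.
  pose proof (Rabs_pos (fst w)). pose proof (Rabs_pos (snd w)).
  assert (Cmod w ^ 2 <= (Rabs (fst w) + Rabs (snd w))^2).
  { rewrite H0. rewrite <- !Rsqr_pow2. rewrite (Rsqr_abs (fst w)), (Rsqr_abs (snd w)). unfold Rsqr. simpl. nra. }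
  nra.
Qed.

Lemma ball_C (a b : C) d : ball a d b <-> Rabs (fst b - fst a) < d /\ Rabs (snd b - snd a) < d.
Proof. destruct a, b. unfold ball; simpl. unfold prod_ball; simpl. rewrite !ball_R. tauto. Qed.

Lemma im_le_Cmod (w : C) : Rabs (snd w) <= Cmod w.
Proof. unfold Cmod. rewrite <- sqrt_Rsqr_abs. apply sqrt_le_1_alt. unfold Rsqr; simpl; nra. Qed.

Lemma ball_C_of_Cmod (a b : C) d : Cmod (b - a) < d -> ball a d b.
Proof.
  intro H. apply ball_C. pose proof (re_le_Cmod (b - a)%C). pose proof (im_le_Cmod (b - a)%C).
  unfold Re in *. split; [eapply Rle_lt_trans; [exact H0|exact H] | eapply Rle_lt_trans; [exact H1|exact H]].
Qed.

Lemma Cmod_of_ball_C (a b : C) d : ball a d b -> Cmod (b - a) < 2 * d.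
Proof.
  intro H. destruct a as [a1 a2], b as [b1 b2]. apply ball_C in H; destruct H as [H1 H2].
  pose proof (proj1 (ball_R _ _ _) H1) as G1. pose proof (proj1 (ball_R _ _ _) H2) as G2.
  cbn [fst snd] in G1, G2. eapply Rle_lt_trans. apply Cmod_le_sum. unfold Cminus, Cplus, Copp.
  cbn [fst snd]. unfold Rminus in *. lra.
Qed.

Lemma Cmod_lt_parts (w1 w2 : C) e : Rabs (fst w1 - fst w2) < e/2 -> Rabs (snd w1 - snd w2) < e/2 -> Cmod (w1 - w2) < e.
Proof.
  destruct w1 as [a1 a2], w2 as [b1 b2]. cbn [fst snd]. intros G1 G2.
  eapply Rle_lt_trans. apply Cmod_le_sum. unfold Cminus, Cplus, Copp.
  cbn [fst snd]. unfold Rminus in *. lra.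
Qed.

Lemma Ccont_near {U : UniformSpace} (f : U -> C) (x : U) : Ccont f x ->
  forall e, 0 < e -> locally x (fun y => Cmod (f y - f x) < e).
Proof.
  intros [H1 H2] e He.
  assert (He2 : 0 < e/2) by lra.
  pose proof (proj1 (filterlim_locally _ _) H1 (mkposreal _ He2)) as L1.
  pose proof (proj1 (filterlim_locally _ _) H2 (mkposreal _ He2)) as L2.
  generalize (filter_and _ _ L1 L2). apply filter_imp. intros y [B1 B2].
  apply Cmod_lt_parts; [apply (proj1 (ball_R _ _ _) B1) | apply (proj1 (ball_R _ _ _) B2)].
Qed.

Lemma rcont_near {U : UniformSpace} (f : U -> R) (x : U) : continuous f x ->
  forall e, 0 < e -> locally x (fun y => Rabs (f y - f x) < e).
Proof.
  intros H e He.
  pose proof (proj1 (filterlim_locally _ _) H (mkposreal _ He)) as L1.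
  revert L1. apply filter_imp. intros y B. apply ball_R in B. auto.
Qed.

Definition Sf c z : C := (- Defs.d0 c z / Defs.d1 c z)%C.
Definition Df c z : C := (Dl c z / (Defs.d1 c z * Defs.d1 c z))%C.
Definition dlt c z : C := (csqrt (Dl c z) / Defs.d1 c z)%C.
Definition hlf : C := RtoC (1/2).

Lemma r1_S c z : Defs.d1 c z <> 0%C -> r1 c z = ((Sf c z + dlt c z) * hlf)%C.
Proof. intro. unfold r1, Sf, dlt, hlf. replace (RtoC (1/2)) with (/ (1+1))%C by (cbnC; f_equal; field).
  field. repeat split; auto; try (cbnC; intro E; injection E; lra). Qed.
Lemma r2_S c z : Defs.d1 c z <> 0%C -> r2 c z = ((Sf c z - dlt c z) * hlf)%C.
Proof. intro. unfold r2, Sf, dlt, hlf. replace (RtoC (1/2)) with (/ (1+1))%C by (cbnC; f_equal; field).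
  field. repeat split; auto; try (cbnC; intro E; injection E; lra). Qed.
Lemma dlt_sq c z : Defs.d1 c z <> 0%C -> (dlt c z * dlt c z)%C = Df c z.
Proof. intro. unfold dlt, Df. rewrite <- (csqrt_sq (Dl c z)) at 3. field. auto. Qed.

Lemma Cmod_hlf (p q : C) e : Cmod p < e -> Cmod q < e -> Cmod ((p + q) * hlf)%C < e /\ Cmod ((p - q) * hlf)%C < e.
Proof.
  intros Hp Hq. unfold hlf. rewrite !Cmod_mult, Cmod_R, Rabs_pos_eq by lra.
  pose proof (Cmod_triangle p q). pose proof (Cmod_triangle p (-q)%C). rewrite Cmod_opp in H0.
  unfold Cminus. lra.
Qed.

Lemma d1_near c z0 : Defs.d1 c z0 <> 0%C -> locally z0 (fun z => Defs.d1 c z <> 0%C).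
Proof.
  intro H. assert (G : Ccont (fun z : C => z) z0) by apply Cc_id.
  assert (Hc : Ccont (fun z => Defs.d1 c z) z0) by ccont.
  pose proof (proj1 (Cmod_gt_0 _) H) as Hm.
  generalize (Ccont_near _ _ Hc _ Hm). apply filter_imp. intros z Hz E.
  rewrite E in Hz. replace (0 - Defs.d1 c z0)%C with (- Defs.d1 c z0)%C in Hz by ring.
  rewrite Cmod_opp in Hz. lra.
Qed.

Lemma pairing c z0 : Defs.d1 c z0 <> 0%C -> forall e, 0 < e ->
  locally z0 (fun z => Defs.d1 c z <> 0%C /\
    ((Cmod (r1 c z - r1 c z0) < e /\ Cmod (r2 c z - r2 c z0) < e) \/
     (Cmod (r1 c z - r2 c z0) < e /\ Cmod (r2 c z - r1 c z0) < e))).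
Proof.
  intros H e He.
  assert (G : Ccont (fun z : C => z) z0) by apply Cc_id.
  assert (HS : Ccont (Sf c) z0). { unfold Sf; ccont. all: cbv beta; auto. }
  assert (HD : Ccont (Df c) z0).
  { unfold Df, Dl. ccont. all: cbv beta. all: try (intro E; apply Cmult_eq0 in E; destruct E; auto). }
  assert (Hee : 0 < e * e) by nra.
  generalize (filter_and _ _ (d1_near c z0 H) (filter_and _ _ (Ccont_near _ _ HS _ He) (Ccont_near _ _ HD _ Hee))).
  apply filter_imp. intros z [Hz [H1 H2]]. split; auto.
  rewrite (r1_S c z Hz), (r2_S c z Hz), (r1_S c z0 H), (r2_S c z0 H).
  rewrite <- (dlt_sq c z Hz), <- (dlt_sq c z0 H) in H2.
  set (S := Sf c z) in *. set (S0 := Sf c z0) in *. set (d := dlt c z) in *. set (d0 := dlt c z0) in *.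
  assert (Hprod : Cmod (d - d0) * Cmod (d + d0) < e * e).
  { rewrite <- Cmod_mult. replace ((d - d0) * (d + d0))%C with (d * d - d0 * d0)%C by ring. auto. }
  pose proof (Cmod_ge_0 (d - d0)). pose proof (Cmod_ge_0 (d + d0)).
  destruct (Rlt_le_dec (Cmod (d - d0)) e) as [L|L].
  - left. destruct (Cmod_hlf (S - S0) (d - d0) e H1 L) as [A1 A2].
    split.
    + replace ((S + d) * hlf - (S0 + d0) * hlf)%C with ((S - S0 + (d - d0)) * hlf)%C by ring. auto.
    + replace ((S - d) * hlf - (S0 - d0) * hlf)%C with ((S - S0 - (d - d0)) * hlf)%C by ring. auto.
  - right. assert (L2 : Cmod (d + d0) < e) by (destruct (Rlt_le_dec (Cmod (d + d0)) e); auto; nra).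
    destruct (Cmod_hlf (S - S0) (d + d0) e H1 L2) as [A1 A2].
    split.
    + replace ((S + d) * hlf - (S0 - d0) * hlf)%C with ((S - S0 + (d + d0)) * hlf)%C by ring. auto.
    + replace ((S - d) * hlf - (S0 + d0) * hlf)%C with ((S - S0 - (d + d0)) * hlf)%C by ring. auto.
Qed.

Lemma Cc_fst (p : C * C) : Ccont (fun w : C * C => fst w) p.
Proof.
  destruct p as [z k]. split.
  - apply (continuous_comp (fun w : C * C => fst w) (fun z : C => fst z)). apply continuous_fst. destruct z; apply continuous_fst.
  - apply (continuous_comp (fun w : C * C => fst w) (fun z : C => snd z)). apply continuous_fst. destruct z; apply continuous_snd.
Qed.
Lemma Cc_snd (p : C * C) : Ccont (fun w : C * C => snd w) p.
Proof.
  destruct p as [z k]. split.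
  - apply (continuous_comp (fun w : C * C => snd w) (fun z : C => fst z)). apply continuous_snd. destruct k; apply continuous_fst.
  - apply (continuous_comp (fun w : C * C => snd w) (fun z : C => snd z)). apply continuous_snd. destruct k; apply continuous_snd.
Qed.

Ltac rcont := first [ assumption | lazymatch goal with
 | |- continuous (fun y => _ * _) _ => apply rc_mult; rcont
 | |- continuous (fun y => _ + _) _ => apply rc_plus; rcont
 | |- continuous (fun y => _ - _) _ => apply rc_minus; rcont
 | |- continuous (fun y => cn2 _) _ => apply cn2c; ccont
 | |- continuous (fun y => _) _ => apply rc_const
 end ].

Lemma BB_cont c (p : C * C) : continuous (fun w : C * C => BB c (fst w) (snd w)) p.
Proof.
  pose proof (Cc_fst p). pose proof (Cc_snd p).
  unfold BB, W0, Wm, Wp. rcont.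
Qed.

Definition stable c z k : Prop := cn2 k < 1 \/ (cn2 k = 1 /\ 0 < BB c z k).
Definition decided c z k : Prop := cn2 k <> 1 \/ BB c z k <> 0.

Lemma AA_ge0 c z k : hyp c -> 0 <= AA c z k.
Proof.
  intro hc. unfold AA. pose proof (E0_pos c hc). pose proof (Ep_ge0 c hc). pose proof (Em_ge0 c hc).
  unfold W0, Wp, Wm. pose proof (cn2_ge0 (1+z)%C). pose proof (cn2_ge0 (1+k*z)%C). pose proof (cn2_ge0 (k+z)%C).
  assert (0 <= E0 c * cn2 (1 + k * z)%C * cn2 (k + z)%C) by (apply Rmult_le_pos; [apply Rmult_le_pos|]; lra).
  assert (0 <= Ep c * cn2 (1 + z)%C * cn2 (k + z)%C) by (apply Rmult_le_pos; [apply Rmult_le_pos|]; lra).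
  assert (0 <= Em c * cn2 (1 + z)%C * cn2 (1 + k * z)%C) by (apply Rmult_le_pos; [apply Rmult_le_pos|]; lra).
  lra.
Qed.

Lemma cn2_lt1 (z : C) : cn2 z < 1 <-> Cmod z < 1.
Proof. rewrite cn2_Cmod. pose proof (Cmod_ge_0 z). split; intro; nra. Qed.
Lemma cn2_gt1 (z : C) : 1 < cn2 z <-> 1 < Cmod z.
Proof. rewrite cn2_Cmod. pose proof (Cmod_ge_0 z). split; intro; nra. Qed.

Lemma Cmod_near (r k : C) : Cmod r <= Cmod k + Cmod (r - k) /\ Cmod k <= Cmod r + Cmod (r - k).
Proof.
  split.
  - replace r with (k + (r - k))%C at 1 by ring. apply Cmod_triangle.
  - replace k with (r + - (r - k))%C at 1 by ring. rewrite <- (Cmod_opp (r - k)). apply Cmod_triangle.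
Qed.

Lemma stab c z0 k : hyp c -> decided c z0 k -> exists e, 0 < e /\
  locally z0 (fun z => forall r, 1 < cn2 z -> Q c z r = 0%C -> Cmod (r - k) < e ->
     (cn2 r < 1 <-> stable c z0 k)).
Proof.
  intros hc Hd.
  destruct (Rtotal_order (cn2 k) 1) as [Hl|[He|Hg]].
  - apply cn2_lt1 in Hl. exists (1 - Cmod k). split; [lra|].
    apply filter_forall. intros z r Hz HQ Hr. unfold stable.
    destruct (Cmod_near r k). assert (cn2 r < 1) by (apply cn2_lt1; lra).
    split; intro; [left; apply cn2_lt1; auto | auto].
  - destruct Hd as [Hd|Hd]; [exfalso; apply Hd; exact He|].
    set (B0 := BB c z0 k) in *.
    assert (HB : 0 < Rabs B0 / 2) by (pose proof (Rabs_pos_lt _ Hd); lra).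
    destruct (rcont_near _ _ (BB_cont c (z0, k)) _ HB) as [d Hdl].
    exists d. split; [apply cond_pos|].
    generalize (locally_ball z0 d). apply filter_imp. intros z Hz r Hz1 HQ Hr.
    assert (Hb : Rabs (BB c z r - B0) < Rabs B0 / 2).
    { apply (Hdl (z, r)). split; auto. apply ball_C_of_Cmod. auto. }
    pose proof (star c z r HQ) as St. pose proof (AA_ge0 c z r hc) as HA.
    pose proof (no_unimod c z r hc Hz1 HQ) as Hn.
    assert (HRA : 0 <= (cn2 z - 1) * AA c z r) by (apply Rmult_le_pos; lra).
    unfold stable. unfold Rabs in Hb, HB. destruct (Rcase_abs B0) as [Bn|Bp]; destruct (Rcase_abs (BB c z r - B0)) in Hb.
    + assert (BB c z r < 0) by lra. split; intro H1.
      * exfalso. nra.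
      * destruct H1 as [H1|[_ H1]]; unfold B0 in *; lra.
    + assert (BB c z r < 0) by lra. split; intro H1.
      * exfalso. nra.
      * destruct H1 as [H1|[_ H1]]; unfold B0 in *; lra.
    + assert (0 < BB c z r) by (destruct (Req_dec B0 0); [contradiction|lra]).
      split; intro H1.
      * right. split; auto. fold B0. destruct (Req_dec B0 0); [contradiction|lra].
      * destruct (Rle_lt_dec 1 (cn2 r)) as [H2|H2]; auto.
        assert (cn2 r > 1) by lra. nra.
    + assert (0 < BB c z r) by (destruct (Req_dec B0 0); [contradiction|lra]).
      split; intro H1.
      * right. split; auto. fold B0. destruct (Req_dec B0 0); [contradiction|lra].
      * destruct (Rle_lt_dec 1 (cn2 r)) as [H2|H2]; auto.
        assert (cn2 r > 1) by lra. nra.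
  - assert (Hg' : 1 < Cmod k) by (apply cn2_gt1; lra).
    exists (Cmod k - 1). split; [lra|].
    apply filter_forall. intros z r Hz HQ Hr. unfold stable.
    destruct (Cmod_near r k). assert (1 < cn2 r) by (apply cn2_gt1; lra).
    split; intro H3; [lra|]. destruct H3 as [H3|[H3 _]]; lra.
Qed.

Definition EM (P : Prop) : {P} + {~ P} := excluded_middle_informative P.
Definition Lsel c z : C :=
  if EM (r1 c z = r2 c z) then r1 c z
  else if EM (decided c z (r1 c z)) then (if EM (stable c z (r1 c z)) then r1 c z else r2 c z)
  else (if EM (stable c z (r2 c z)) then r2 c z else r1 c z).
Definition Luns c z : C :=
  if EM (r1 c z = r2 c z) then r1 c z
  else if EM (decided c z (r1 c z)) then (if EM (stable c z (r1 c z)) then r2 c z else r1 c z)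
  else (if EM (stable c z (r2 c z)) then r1 c z else r2 c z).

Lemma L_cases c z : (Lsel c z = r1 c z /\ Luns c z = r2 c z) \/ (Lsel c z = r2 c z /\ Luns c z = r1 c z).
Proof.
  unfold Lsel, Luns. destruct (EM (r1 c z = r2 c z)) as [E|E]; [left; auto|].
  destruct (EM (decided c z (r1 c z))); [destruct (EM (stable c z (r1 c z)))|destruct (EM (stable c z (r2 c z)))]; auto.
Qed.

Lemma pos_neg x y : 0 < x -> x * y < 0 -> y < 0.
Proof. intros. nra. Qed.
Lemma neg_pos x y : x < 0 -> x * y < 0 -> 0 < y.
Proof. intros. nra. Qed.

Lemma U_facts c z : hyp c -> 1 < cn2 z -> Defs.d1 c z <> 0%C ->
  cn2 (Lsel c z) < 1 /\ 1 < cn2 (Luns c z).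
Proof.
  intros hc Hz Hd.
  pose proof (Psi_neg c z hc Hz) as P. rewrite Psi_roots in P by auto.
  pose proof (cn2_pos _ Hd) as Hp.
  assert (P2 : (1 - cn2 (r1 c z)) * (1 - cn2 (r2 c z)) < 0).
  { destruct (Rle_lt_dec 0 ((1 - cn2 (r1 c z)) * (1 - cn2 (r2 c z)))); auto.
    assert (0 <= cn2 (Defs.d1 c z) * ((1 - cn2 (r1 c z)) * (1 - cn2 (r2 c z)))) by (apply Rmult_le_pos; lra).
    rewrite <- Rmult_assoc in H. lra. }
  set (A := cn2 (r1 c z)) in *. set (B := cn2 (r2 c z)) in *.
  unfold Lsel, Luns. destruct (EM (r1 c z = r2 c z)) as [E|E].
  { exfalso. unfold A, B in P2. rewrite E in P2. pose proof (Rle_0_sqr (1 - cn2 (r2 c z))) as Hq. unfold Rsqr in Hq. lra. }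
  destruct (EM (decided c z (r1 c z))) as [D|D].
  - destruct (EM (stable c z (r1 c z))) as [S|S].
    + destruct S as [S|[S _]]; [|fold A in S; rewrite S in P2; lra].
      fold A in S. fold A B. split; [lra|].
      assert (1 - B < 0) by (apply (pos_neg (1 - A)); lra). lra.
    + fold A B. unfold stable in S. fold A in S.
      assert (A <> 1) by (intro E1; rewrite E1 in P2; lra).
      assert (1 < A) by (destruct (Rtotal_order A 1) as [h|[h|h]]; [exfalso; apply S; left; auto|contradiction|lra]).
      assert (0 < 1 - B) by (apply (neg_pos (1 - A)); lra). split; lra.
  - exfalso. unfold decided in D. fold A in D. apply D. left. intro E1. rewrite E1 in P2. lra.
Qed.

Lemma match_roots c z z0 j o m :
  ((j = r1 c z0 /\ o = r2 c z0) \/ (j = r2 c z0 /\ o = r1 c z0)) ->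
  ((Cmod (r1 c z - r1 c z0) < m /\ Cmod (r2 c z - r2 c z0) < m) \/
   (Cmod (r1 c z - r2 c z0) < m /\ Cmod (r2 c z - r1 c z0) < m)) ->
  exists rj ro, ((rj = r1 c z /\ ro = r2 c z) \/ (rj = r2 c z /\ ro = r1 c z)) /\
     Cmod (rj - j) < m /\ Cmod (ro - o) < m.
Proof.
  intros [[-> ->]|[-> ->]] [[H1 H2]|[H1 H2]].
  - exists (r1 c z), (r2 c z). auto.
  - exists (r2 c z), (r1 c z). auto.
  - exists (r2 c z), (r1 c z). auto.
  - exists (r1 c z), (r2 c z). auto.
Qed.

Lemma key_gen c z0 j o : hyp c -> Defs.d1 c z0 <> 0%C -> decided c z0 j ->
  ((j = r1 c z0 /\ o = r2 c z0) \/ (j = r2 c z0 /\ o = r1 c z0)) ->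
  forall e, 0 < e -> locally z0 (fun z => Udom c z ->
     (stable c z0 j -> Cmod (Lsel c z - j) < e /\ Cmod (Luns c z - o) < e) /\
     (~ stable c z0 j -> Cmod (Lsel c z - o) < e /\ Cmod (Luns c z - j) < e)).
Proof.
  intros hc Hd Dj Hjo e He.
  destruct (stab c z0 j hc Dj) as [e0 [He0 Nst]].
  set (m := Rmin e0 e).
  assert (Hm : 0 < m) by (unfold m; apply Rmin_pos; auto).
  generalize (filter_and _ _ Nst (pairing c z0 Hd m Hm)).
  apply filter_imp. intros z [Hs [Hdz Hp]] [Hz [_ Hd1]].
  apply cn2_gt1 in Hz.
  destruct (match_roots c z z0 j o m Hjo Hp) as [rj [ro [Hr [Hrj Hro]]]].
  assert (Qj : Q c z rj = 0%C) by (apply Q_zero_iff; auto; destruct Hr as [[-> _]|[-> _]]; auto).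
  assert (Hmj : Cmod (rj - j) < e0) by (eapply Rlt_le_trans; [exact Hrj| apply Rmin_l]).
  pose proof (Hs rj Hz Qj Hmj) as Sj.
  assert (Hme : m <= e) by apply Rmin_r.
  destruct (U_facts c z hc Hz Hd1) as [U1 U2].
  assert (M : (Lsel c z = rj /\ Luns c z = ro) \/ (Lsel c z = ro /\ Luns c z = rj)).
  { destruct (L_cases c z) as [[-> ->]|[-> ->]]; destruct Hr as [[-> ->]|[-> ->]]; auto. }
  split; intro S.
  - apply Sj in S. destruct M as [[E1 E2]|[E1 E2]].
    + rewrite E1, E2. split; lra.
    + rewrite E2 in U2. lra.
  - destruct M as [[E1 E2]|[E1 E2]].
    + rewrite E1 in U1. exfalso. apply S. apply Sj. auto.
    + rewrite E1, E2. split; lra.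
Qed.

Lemma key c z0 : hyp c -> cn2 z0 = 1 -> forall e, 0 < e ->
  locally z0 (fun z => Udom c z -> Cmod (Lsel c z - Lsel c z0) < e /\ Cmod (Luns c z - Luns c z0) < e).
Proof.
  intros hc Hz0 e He.
  pose proof (d1_circ c z0 hc Hz0) as Hd.
  destruct (EM (r1 c z0 = r2 c z0)) as [E|E].
  - assert (L : Lsel c z0 = r1 c z0 /\ Luns c z0 = r1 c z0).
    { unfold Lsel, Luns. destruct (EM (r1 c z0 = r2 c z0)); [auto|contradiction]. }
    destruct L as [L1 L2]. rewrite L1, L2.
    generalize (pairing c z0 Hd e He). apply filter_imp. intros z [_ Hp] _.
    rewrite <- E in Hp.
    destruct (L_cases c z) as [[-> ->]|[-> ->]]; destruct Hp as [[H1 H2]|[H1 H2]]; auto.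
  - destruct (EM (decided c z0 (r1 c z0))) as [D|D].
    + generalize (key_gen c z0 (r1 c z0) (r2 c z0) hc Hd D (or_introl (conj eq_refl eq_refl)) e He).
      apply filter_imp. intros z H HU. destruct (H HU) as [H1 H2].
      destruct (EM (stable c z0 (r1 c z0))) as [S|S].
      * assert (L : Lsel c z0 = r1 c z0 /\ Luns c z0 = r2 c z0).
        { unfold Lsel, Luns. destruct (EM (r1 c z0 = r2 c z0)); [contradiction|].
          destruct (EM (decided c z0 (r1 c z0))); [|contradiction].
          destruct (EM (stable c z0 (r1 c z0))); [auto|contradiction]. }
        destruct L as [-> ->]. auto.
      * assert (L : Lsel c z0 = r2 c z0 /\ Luns c z0 = r1 c z0).
        { unfold Lsel, Luns. destruct (EM (r1 c z0 = r2 c z0)); [contradiction|].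
          destruct (EM (decided c z0 (r1 c z0))); [|contradiction].
          destruct (EM (stable c z0 (r1 c z0))); [contradiction|auto]. }
        destruct L as [-> ->]. auto.
    + assert (D2 : decided c z0 (r2 c z0)).
      { destruct (EM (decided c z0 (r2 c z0))) as [D2|D2]; auto. exfalso.
        unfold decided in D, D2.
        apply (both_und c z0 hc Hz0 E).
        - destruct (Req_dec (cn2 (r1 c z0)) 1); auto. exfalso; apply D; left; auto.
        - destruct (Req_dec (cn2 (r2 c z0)) 1); auto. exfalso; apply D2; left; auto.
        - destruct (Req_dec (BB c z0 (r1 c z0)) 0); auto. exfalso; apply D; right; auto.
        - destruct (Req_dec (BB c z0 (r2 c z0)) 0); auto. exfalso; apply D2; right; auto. }
      generalize (key_gen c z0 (r2 c z0) (r1 c z0) hc Hd D2 (or_intror (conj eq_refl eq_refl)) e He).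
      apply filter_imp. intros z H HU. destruct (H HU) as [H1 H2].
      destruct (EM (stable c z0 (r2 c z0))) as [S|S].
      * assert (L : Lsel c z0 = r2 c z0 /\ Luns c z0 = r1 c z0).
        { unfold Lsel, Luns. destruct (EM (r1 c z0 = r2 c z0)); [contradiction|].
          destruct (EM (decided c z0 (r1 c z0))); [contradiction|].
          destruct (EM (stable c z0 (r2 c z0))); [auto|contradiction]. }
        destruct L as [-> ->]. auto.
      * assert (L : Lsel c z0 = r1 c z0 /\ Luns c z0 = r2 c z0).
        { unfold Lsel, Luns. destruct (EM (r1 c z0 = r2 c z0)); [contradiction|].
          destruct (EM (decided c z0 (r1 c z0))); [contradiction|].
          destruct (EM (stable c z0 (r2 c z0))); [contradiction|auto]. }
        destruct L as [-> ->]. auto.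
Qed.

Lemma charEq_Q c z (k : C) : k <> 0%C -> charEq c z k = (Q c z k / k)%C.
Proof. intro. unfold charEq, Q. field. auto. Qed.

Lemma lim_of_key c z0 (L : C -> C) :
  (forall e, 0 < e -> locally z0 (fun z => Udom c z -> Cmod (L z - L z0) < e)) ->
  filterlim L (within (Udom c) (locally z0)) (locally (L z0)).
Proof.
  intro H. apply filterlim_locally. intro eps. unfold within.
  generalize (H eps (cond_pos eps)). apply filter_imp. intros z Hz HU.
  apply ball_C_of_Cmod. auto.
Qed.

Lemma cn2_one : cn2 (RtoC 1) = 1.
Proof. unfold cn2; simpl; ring. Qed.
Lemma cn2_mone : cn2 (RtoC (-1)) = 1.
Proof. unfold cn2; simpl; ring. Qed.

Theorem mainTheorem11 (Cc : R) (hC : 0 < Rabs Cc <= 1/2) :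
  exists ks ku : C -> C,
    (forall z, Udom Cc z ->
        Cmod (ks z) < 1 /\ 1 < Cmod (ku z) /\
        (forall kappa, kappa <> RtoC 0 ->
           (charEq Cc z kappa = RtoC 0 <-> kappa = ks z \/ kappa = ku z))) /\
    (forall z0, Cmod z0 = 1 ->
        filterlim ks (within (Udom Cc) (locally z0)) (locally (ks z0)) /\
        filterlim ku (within (Udom Cc) (locally z0)) (locally (ku z0))) /\
    (Cc < 0 -> ks (RtoC 1) = RtoC (-1) /\ ku (RtoC 1) = RtoC 1) /\
    (0 < Cc -> ks (RtoC 1) = RtoC 1 /\ ku (RtoC 1) = RtoC (-1)) /\
    ks (RtoC (-1)) = RtoC 1 /\ ku (RtoC (-1)) = RtoC 1.
Proof.
  pose proof (hyp_of Cc hC) as hc.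
  exists (Lsel Cc), (Luns Cc).
  split; [|split; [|split; [|split]]].
  - intros z [Hz [Hm Hd]]. apply cn2_gt1 in Hz.
    destruct (U_facts Cc z hc Hz Hd) as [U1 U2].
    split; [apply cn2_lt1; auto|split; [apply cn2_gt1; auto|]].
    intros k Hk. rewrite charEq_Q by auto.
    assert (E : (Q Cc z k / k)%C = RtoC 0 <-> Q Cc z k = RtoC 0).
    { split; intro H.
      - replace (Q Cc z k) with ((Q Cc z k / k) * k)%C by (field; auto). rewrite H. ring.
      - rewrite H. field. auto. }
    rewrite E, Q_zero_iff by auto.
    destruct (L_cases Cc z) as [[-> ->]|[-> ->]]; tauto.
  - intros z0 Hz0.
    assert (Hc : cn2 z0 = 1) by (rewrite cn2_Cmod, Hz0; ring).
    split; apply lim_of_key; intros e He; generalize (key Cc z0 hc Hc e He); apply filter_imp; intros z H HU; apply H; auto.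
  - intro Hn. pose proof (BB_1_1 Cc) as B1. pose proof (BB_1_m1 Cc) as B2.
    unfold Lsel, Luns.
    destruct (r_1 Cc hc) as [[E1 E2]|[E1 E2]]; rewrite E1, E2.
    + destruct (EM (RtoC 1 = RtoC (-1))) as [X|X]; [injection X; lra|].
      destruct (EM (decided Cc (RtoC 1) (RtoC 1))) as [D|D].
      * destruct (EM (stable Cc (RtoC 1) (RtoC 1))) as [S|S]; [|auto].
        exfalso. destruct S as [S|[_ S]]; [rewrite cn2_one in S; lra|]. rewrite B1 in S. lra.
      * exfalso. apply D. right. rewrite B1. lra.
    + destruct (EM (RtoC (-1) = RtoC 1)) as [X|X]; [injection X; lra|].
      destruct (EM (decided Cc (RtoC 1) (RtoC (-1)))) as [D|D].
      * exfalso. destruct D as [D|D]; [apply D; apply cn2_mone|apply D; apply B2].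
      * destruct (EM (stable Cc (RtoC 1) (RtoC 1))) as [S|S]; [|auto].
        exfalso. destruct S as [S|[_ S]]; [rewrite cn2_one in S; lra|]. rewrite B1 in S. lra.
  - intro Hp. pose proof (BB_1_1 Cc) as B1. pose proof (BB_1_m1 Cc) as B2.
    unfold Lsel, Luns.
    destruct (r_1 Cc hc) as [[E1 E2]|[E1 E2]]; rewrite E1, E2.
    + destruct (EM (RtoC 1 = RtoC (-1))) as [X|X]; [injection X; lra|].
      destruct (EM (decided Cc (RtoC 1) (RtoC 1))) as [D|D].
      * destruct (EM (stable Cc (RtoC 1) (RtoC 1))) as [S|S]; [auto|].
        exfalso. apply S. right. split; [apply cn2_one|]. rewrite B1. lra.
      * exfalso. apply D. right. rewrite B1. lra.
    + destruct (EM (RtoC (-1) = RtoC 1)) as [X|X]; [injection X; lra|].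
      destruct (EM (decided Cc (RtoC 1) (RtoC (-1)))) as [D|D].
      * exfalso. destruct D as [D|D]; [apply D; apply cn2_mone|apply D; apply B2].
      * destruct (EM (stable Cc (RtoC 1) (RtoC 1))) as [S|S]; [auto|].
        exfalso. apply S. right. split; [apply cn2_one|]. rewrite B1. lra.
  - destruct (r_m1 Cc hc) as [E1 E2]. unfold Lsel, Luns. rewrite E1, E2.
    destruct (EM (RtoC 1 = RtoC 1)) as [X|X]; [auto|contradiction].
Qed.
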